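(* Fix an integer $\alpha\ge2$, an integer $\Delta\ge3$, and parameters $\beta_\mu>\beta_\nu\ge\frac{\Delta-2}{\Delta}$ with $\beta:=(\beta_\nu/\beta_\mu)^\alpha\beta_\mu<\frac{\Delta-2}{\Delta}$. There is a constant $C=C(\Delta,\alpha,\beta_\nu,\beta_\mu)>0$ such that for every $\Delta$-regular graph $G$, letting $\nu$ and $\mu$ be the Gibbs distributions of $(G,\beta_\nu)$ and $(G,\beta_\mu)$ respectively, $$\frac1C\,Z(G,\beta)\ \le\ D_{\chi^\alpha}(\nu\|\mu)\cdot\frac{Z(G,\beta_\nu)^\alpha}{Z(G,\beta_\mu)^{\alpha-1}}\ \le\ C\,Z(G,\beta).$$
   Context: For a graph $G=(V,E)$ and $\gamma>0$, the Ising model $(G,\gamma)$ has Gibbs distribution on $\{-1,+1\}^V$ given by $\pi(\sigma)=\gamma^{m(\sigma)}/Z(G,\gamma)$, where $m(\sigma)=|\{\{u,v\}\in E:\sigma_u=\sigma_v\}|$ and $Z(G,\gamma)=\sum_{\sigma\in\{-1,+1\}^V}\gamma^{m(\sigma)}$ is its partition function. The $\chi^\alpha$-divergence is $D_{\chi^\alpha}(\nu\|\mu)=\sum_\sigma\mu(\sigma)\cdot\frac12\left|\frac{\nu(\sigma)}{\mu(\sigma)}-1\right|^\alpha$. *)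

(* Defs.v *)
From mathcomp Require Import all_boot all_order all_algebra.
Set Implicit Arguments. Unset Strict Implicit. Unset Printing Implicit Defensive.
Import Order.TTheory GRing.Theory Num.Theory.
Local Open Scope ring_scope.

(* A finite simple graph is a symmetric irreflexive relation e on a finType T.
   Spin configurations sigma : {ffun T -> bool} (true = +1, false = -1). *)

Definition simple_graph (T : finType) (e : rel T) : Prop :=
  symmetric e /\ irreflexive e.

Definition regular (T : finType) (e : rel T) (D : nat) : Prop :=
  forall v : T, #|[pred u | e v u]| = D.

(* m(sigma): number of (unordered) edges {u,v} with sigma_u = sigma_v;
   computed as the number of ordered such pairs divided by 2. *)
Definition mono (T : finType) (e : rel T) (s : {ffun T -> bool}) : nat :=
  (#|[pred p : T * T | e p.1 p.2 && (s p.1 == s p.2)]| %/ 2)%N.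

Definition Zpart (R : realFieldType) (T : finType) (e : rel T) (g : R) : R :=
  \sum_(s : {ffun T -> bool}) g ^+ mono e s.

Definition gibbs (R : realFieldType) (T : finType) (e : rel T) (g : R)
  (s : {ffun T -> bool}) : R :=
  g ^+ mono e s / Zpart e g.

Definition chi_div (R : realFieldType) (T : finType) (a : nat)
  (nu mu : {ffun T -> bool} -> R) : R :=
  \sum_(s : {ffun T -> bool}) mu s * (2^-1 * `|nu s / mu s - 1| ^+ a).

(* Main.v *)
Require Import Defs.
From mathcomp Require Import all_boot all_order all_algebra.
From mathcomp Require Import reals.
From mathcomp Require Import zify ring lra.
Import Order.TTheory GRing.Theory Num.Theory.
Set Implicit Arguments. Unset Strict Implicit. Unset Printing Implicit Defensive.

Lemma card_sum (T : finType) (P : pred T) : #|[pred x | P x]| = \sum_x (P x : nat).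
Proof.
rewrite -sum1_card big_mkcond; apply: eq_bigr => x _; rewrite inE; by case: (P x).
Qed.

Section Comb.
Variables (T : finType) (e : rel T).
Hypothesis esym : symmetric e.
Hypothesis eirr : irreflexive e.

Definition flip (s : {ffun T -> bool}) (v : T) : {ffun T -> bool} :=
  [ffun x => if x == v then ~~ s x else s x].

Lemma flipK s v : flip (flip s v) v = s.
Proof. apply/ffunP => x; rewrite !ffunE; case: eqP => // ->; by rewrite negbK. Qed.

Lemma flip_inj v : injective (flip ^~ v).
Proof. by move=> s t H; rewrite -(flipK s v) H flipK. Qed.

Definition agr (s : {ffun T -> bool}) v := \sum_u ((e v u && (s u == s v)) : nat).
Definition dis (s : {ffun T -> bool}) v := \sum_u ((e v u && (s u != s v)) : nat).
Definition good (s : {ffun T -> bool}) v := agr s v != dis s v.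
Definition gc (s : {ffun T -> bool}) := \sum_w (good s w : nat).

Definition F (s : {ffun T -> bool}) x y : nat := e x y && (s x == s y).

Lemma mono_sum s : mono e s = (\sum_x \sum_y F s x y) %/ 2.
Proof.
rewrite /mono card_sum pair_big /=; congr (_ %/ 2); apply: eq_bigr => p _ //.
Qed.

Lemma agr_dis D s v : regular e D -> agr s v + dis s v = D.
Proof.
move=> reg; rewrite -(reg v) card_sum /agr /dis -big_split /=.
apply: eq_bigr => u _; by case: (e v u); case: (s u == s v).
Qed.

Lemma F_flip s v x y :
  F (flip s v) x y + ((x == v) + (y == v)) * F s x y =
  F s x y + ((x == v) + (y == v)) * F (flip s v) x y.
Proof.
rewrite /F !ffunE.
case: (x =P v) => [->|hx]; case: (y =P v) => [->|hy] /=; rewrite ?eirr //=; lia.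
Qed.

Lemma sumF_row s v : \sum_y F s v y = agr s v.
Proof. apply: eq_bigr => y _; by rewrite /F eq_sym. Qed.

Lemma sumF_col s v : \sum_x F s x v = agr s v.
Proof. apply: eq_bigr => y _; by rewrite /F esym. Qed.

Lemma sumF_row' s v : \sum_y F (flip s v) v y = dis s v.
Proof.
apply: eq_bigr => y _; rewrite /F !ffunE eqxx.
case: (y =P v) => [->|hy]; first by rewrite eirr.
by case: (s v); case: (s y).
Qed.

Lemma sumF_col' s v : \sum_x F (flip s v) x v = dis s v.
Proof.
apply: eq_bigr => y _; rewrite /F !ffunE eqxx esym.
case: (y =P v) => [->|hy]; first by rewrite eirr.
by case: (s v); case: (s y).
Qed.

Lemma sum_w (G : T -> T -> nat) v :
  \sum_x \sum_y ((x == v) + (y == v)) * G x y = \sum_y G v y + \sum_x G x v.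
Proof.
rewrite -[RHS]addn0.
have -> : \sum_x \sum_y ((x == v) + (y == v)) * G x y =
  \sum_x (\sum_y (x == v) * G x y + \sum_y (y == v) * G x y).
  by apply: eq_bigr => x _; rewrite -big_split; apply: eq_bigr => y _; rewrite mulnDl.
rewrite big_split /= addn0; congr (_ + _).
  rewrite (bigD1 v) //= [X in _ + X]big1; last first.
    by move=> x /negbTE hx; apply: big1 => y _; rewrite hx.
  by rewrite addn0; apply: eq_bigr => y _; rewrite eqxx mul1n.
apply: eq_bigr => x _; rewrite (bigD1 v) //= [X in _ + X]big1 ?eqxx ?mul1n ?addn0 //.
by move=> y /negbTE ->.
Qed.

Lemma mono_flip s v : mono e (flip s v) + agr s v = mono e s + dis s v.
Proof.
rewrite !mono_sum.
have H : \sum_x \sum_y F (flip s v) x y + (agr s v + agr s v) =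
         \sum_x \sum_y F s x y + (dis s v + dis s v).
  rewrite -{1}(sumF_row s v) -{1}(sumF_col s v) -(sum_w (F s)).
  rewrite -{1}(sumF_row' s v) -(sumF_col' s v) -(sum_w (F (flip s v))).
  rewrite -!big_split /=; apply: eq_bigr => x _; rewrite -!big_split /=.
  apply: eq_bigr => y _; exact: F_flip.
have E : forall n k, (n + (k + k)) %/ 2 = n %/ 2 + k.
  by move=> n k; rewrite addnn -mul2n mulnC addnC divnMDl // addnC.
by rewrite -!E H.
Qed.

Lemma agr_flip_self s v : agr (flip s v) v = dis s v.
Proof. by rewrite -sumF_row' -sumF_row. Qed.

Lemma dis_flip_self s v : dis (flip s v) v = agr s v.
Proof.
apply: eq_bigr => y _; rewrite !ffunE eqxx.
case: (y =P v) => [->|hy]; first by rewrite eirr.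
by case: (s v); case: (s y).
Qed.

Lemma good_flip_self s v : good (flip s v) v = good s v.
Proof. by rewrite /good agr_flip_self dis_flip_self eq_sym. Qed.

Lemma flip_far s v w : w != v -> ~~ e v w ->
  agr (flip s v) w = agr s w /\ dis (flip s v) w = dis s w.
Proof.
move=> /negbTE hw hvw; split; apply: eq_bigr => u _; rewrite !ffunE hw;
  case: (u =P v) => [->|hu] //; by rewrite esym (negbTE hvw).
Qed.

Lemma good_le s v w : (good s w <= good (flip s v) w + (w == v) + e v w)%N.
Proof.
case: (w =P v) => [->|/eqP hw]; first by lia.
case hvw: (e v w); first by lia.
have [H1 H2] := flip_far s hw (negbT hvw).
by rewrite /good H1 H2; lia.
Qed.

Lemma gc_flip D s v : regular e D -> (gc s <= gc (flip s v) + D.+1)%N.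
Proof.
move=> reg.
have -> : D.+1 = \sum_w ((w == v) : nat) + \sum_w (e v w : nat).
  have E1 : \sum_w ((w == v) : nat) = 1%N.
    by rewrite (bigD1 v) //= eqxx big1 // => i /negbTE ->.
  by rewrite E1 add1n -(reg v) card_sum.
rewrite /gc -!big_split /=; apply: leq_sum => w _.
by rewrite addnA; apply: good_le.
Qed.

Lemma good_gc s v : good s v -> (0 < gc s)%N.
Proof. by move=> h; rewrite /gc (bigD1 v) //= h. Qed.

Lemma gc0 s v : gc s = 0%N -> good s v = false.
Proof. move=> h; apply/negbTE/negP => g; have := @good_gc s v g; by rewrite h. Qed.

Lemma flip_nb s v u : e u v ->
  agr (flip s v) u + (s v == s u) = agr s u + (s v != s u).
Proof.
move=> huv.
have hu : (u == v) = false by apply/negP => /eqP h; rewrite h eirr in huv.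
rewrite /agr (bigD1 v) //= [in RHS](bigD1 v) //=.
have -> : \sum_(i | i != v) ((e u i && (flip s v i == flip s v u)) : nat) =
          \sum_(i | i != v) ((e u i && (s i == s u)) : nat).
  by apply: eq_bigr => w /negbTE hw; rewrite !ffunE hw hu.
rewrite !ffunE eqxx hu huv /=; case: (s v); case: (s u) => /=; lia.
Qed.

Lemma gc0_flip D s v : regular e D -> (0 < D)%N -> gc s = 0%N -> (0 < gc (flip s v))%N.
Proof.
move=> reg D0 h.
have : (0 < #|[pred u | e v u]|)%N by rewrite reg.
case/card_gt0P => u; rewrite inE => hvu.
apply: (@good_gc _ u).
have := gc0 u h; rewrite /good => /negbT; rewrite negbK => /eqP H.
have A1 := agr_dis s u reg. have A2 := agr_dis (flip s v) u reg.
have N := @flip_nb s v u (etrans (esym u v) hvu).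
apply/eqP => H2.
move: N; case: (s v); case: (s u) => /=; lia.
Qed.

Lemma mono_good D s v : regular e D -> good s v ->
  mono e (flip s v) != mono e s /\ (mono e (flip s v) <= mono e s + D)%N /\ (mono e s <= mono e (flip s v) + D)%N.
Proof.
move=> reg g; have := mono_flip s v; have := agr_dis s v reg; move: g; rewrite /good; lia.
Qed.

Lemma mono_bad D s v : regular e D -> ~~ good s v -> mono e (flip s v) = mono e s.
Proof.
move=> reg g; have := mono_flip s v; move: g; rewrite /good negbK => /eqP; lia.
Qed.

End Comb.

Local Open Scope ring_scope.

Section Holder.
Variables (R : realFieldType) (I : finType) (w t : I -> R).
Hypothesis w0 : forall i, 0 <= w i.
Hypothesis t0 : forall i, 0 <= t i.

Lemma cheb k : (\sum_i w i * t i ^+ k) * (\sum_j w j * t j) <=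
               (\sum_i w i) * (\sum_j w j * t j ^+ k.+1).
Proof.
set L := _ * _; set Rr := _ * (\sum_j _).
have E1 : L = \sum_i \sum_j w i * w j * (t i ^+ k * t j).
  rewrite /L mulr_suml; apply: eq_bigr => i _; rewrite mulr_sumr; apply: eq_bigr => j _; ring.
have E2 : L = \sum_i \sum_j w i * w j * (t j ^+ k * t i).
  rewrite E1 exchange_big; apply: eq_bigr => i _; apply: eq_bigr => j _; ring.
have E3 : Rr = \sum_i \sum_j w i * w j * t j ^+ k.+1.
  rewrite /Rr mulr_suml; apply: eq_bigr => i _; rewrite mulr_sumr; apply: eq_bigr => j _; ring.
have E4 : Rr = \sum_i \sum_j w i * w j * t i ^+ k.+1.
  rewrite E3 exchange_big; apply: eq_bigr => i _; apply: eq_bigr => j _; ring.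
suff : L + L <= Rr + Rr by lra.
rewrite {1}E1 E2 {1}E3 E4 -!big_split /=; apply: ler_sum => i _.
rewrite -!big_split /=; apply: ler_sum => j _.
have wij : 0 <= w i * w j by rewrite mulr_ge0.
rewrite -!mulrDr; apply: ler_wpM2l => //.
have H : 0 <= (t i ^+ k - t j ^+ k) * (t i - t j).
  case: (lerP (t i) (t j)) => h.
    apply: mulr_le0; last by lra.
    by rewrite subr_le0 lerXn2r // nnegrE.
  apply: mulr_ge0; last by lra.
  by rewrite subr_ge0 lerXn2r ?nnegrE // ltW.
rewrite !exprSr; nra.
Qed.

Lemma holder n : (\sum_i w i * t i) ^+ n.+1 <= (\sum_i w i) ^+ n * \sum_i w i * t i ^+ n.+1.
Proof.
elim: n => [|n IH]; first by rewrite expr0 mul1r expr1; apply: le_refl.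
rewrite exprS mulrC.
have S0 : 0 <= \sum_i w i * t i by apply: sumr_ge0 => i _; rewrite mulr_ge0.
have W0 : 0 <= \sum_i w i by apply: sumr_ge0.
apply: (le_trans (ler_wpM2r S0 IH)).
rewrite -mulrA exprS [_ * (_ ^+ n)]mulrC -mulrA; apply: ler_wpM2l.
  by rewrite exprn_ge0.
exact: cheb.
Qed.
End Holder.

Section Pair.
Variables (R : realFieldType) (r q bmu : R) (a D : nat).
Hypotheses (r0 : 0 < r) (r1 : r < 1) (b0 : 0 < bmu).

Definition Mc := (1 + bmu + bmu^-1) ^+ D.
Definition Kc := (2 / (1 - r)) ^+ a * Mc.

Lemma Mc_ge1 : 1 <= Mc.
Proof. by apply: exprn_ege1; rewrite -addrA lerDl addr_ge0 // ?invr_ge0 ltW. Qed.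

Lemma bmu_le m m' : (m' <= m + D)%N -> (m <= m' + D)%N -> bmu ^+ m <= Mc * bmu ^+ m'.
Proof.
move=> h1 h2; set c := 1 + bmu + bmu^-1.
have hi : 0 <= bmu^-1 by rewrite invr_ge0 ltW.
have b0' := ltW b0.
have c1 : 1 <= c by rewrite /c; move: hi b0'; generalize bmu^-1 => x; lra.
have cb : bmu <= c by rewrite /c; move: hi b0'; generalize bmu^-1 => x; lra.
have cbi : bmu^-1 <= c by rewrite /c; move: hi b0'; generalize bmu^-1 => x; lra.
case: (leqP m m') => h.
  have [d Hd] : exists d, m' = (m + d)%N by exists (m' - m)%N; lia.
  subst m'.
  rewrite exprD mulrA mulrAC ler_pMl; last by rewrite exprn_gt0.
  have E : bmu^-1 ^+ d * bmu ^+ d = 1 by rewrite exprVn mulVf // expf_neq0 // gt_eqF.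
  rewrite -{1}E; apply: ler_wpM2r; first by rewrite exprn_ge0.
  apply: (@le_trans _ _ (c ^+ d)); first by rewrite lerXn2r // nnegrE (le_trans ler01 c1).
  by rewrite /Mc -/c; apply: ler_weXn2l => //; lia.
have [d Hd] : exists d, m = (m' + d)%N by exists (m - m')%N; lia.
subst m.
rewrite exprD mulrC; apply: ler_wpM2r; first by rewrite exprn_ge0 // ltW.
apply: (@le_trans _ _ (c ^+ d)); first by rewrite lerXn2r // nnegrE ltW // (lt_le_trans ltr01 c1).
by rewrite /Mc -/c; apply: ler_weXn2l => //; lia.
Qed.

Lemma rdiff m m' : m != m' -> (1 - r) * r ^+ m <= `|r ^+ m - r ^+ m'|.
Proof.
move=> h; have r0c := r0; have r1c := r1; have rm0 : 0 < r ^+ m by rewrite exprn_gt0.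
have rm1 : 0 < r ^+ m' by rewrite exprn_gt0.
have r1' : 0 < 1 - r by lra.
case: (ltngtP m m') h => // hm _.
  have : r ^+ m' <= r ^+ m.+1 by apply: ler_wiXn2l; rewrite ?ltW.
  rewrite exprS => H.
  have P : 0 < (1 - r) * r ^+ m by rewrite mulr_gt0.
  rewrite ger0_norm; move: H rm0 rm1 P;
  generalize (r ^+ m) (r ^+ m') => x y *; nra.
have : r ^+ m <= r ^+ m'.+1 by apply: ler_wiXn2l; rewrite ?ltW //.
rewrite exprS => H.
have : r ^+ m <= r ^+ m' by apply: ler_wiXn2l; rewrite ?ltW // ltnW.
have P : 0 < (1 - r) * r ^+ m' by rewrite mulr_gt0.
move=> H2; rewrite ler0_norm; move: H H2 rm0 rm1 P;
  generalize (r ^+ m) (r ^+ m') => x y *; nra.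
Qed.

Lemma two_pt x y : (`|x - y| / 2) ^+ a <= `|x - q| ^+ a + `|y - q| ^+ a.
Proof.
have hd : `|x - y| <= `|x - q| + `|y - q|.
  have -> : x - y = (x - q) - (y - q) by ring.
  by apply: (le_trans (ler_normB _ _)).
have A0 := normr_ge0 (x - q); have B0 := normr_ge0 (y - q).
have d0 := normr_ge0 (x - y).
case: (lerP `|x - q| `|y - q|) => h.
  apply: (@le_trans _ _ (`|y - q| ^+ a)); last by rewrite lerDr exprn_ge0.
  by apply: lerXn2r; rewrite ?nnegrE //; lra.
apply: (@le_trans _ _ (`|x - q| ^+ a)); last by rewrite lerDl exprn_ge0.
by apply: lerXn2r; rewrite ?nnegrE //; lra.
Qed.

Lemma pair_ineq m m' : m != m' -> (m' <= m + D)%N -> (m <= m' + D)%N ->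
  bmu ^+ m * (r ^+ m) ^+ a <=
  Kc * (bmu ^+ m * `|r ^+ m - q| ^+ a + bmu ^+ m' * `|r ^+ m' - q| ^+ a).
Proof.
move=> hm h1 h2; have r1c := r1.
have r1' : 0 < 1 - r by lra.
have bm0 : 0 < bmu ^+ m by rewrite exprn_gt0.
have bm1 : 0 <= bmu ^+ m' by rewrite exprn_ge0 // ltW.
have K1 : (r ^+ m) ^+ a <= (2 / (1 - r)) ^+ a * (`|r ^+ m - q| ^+ a + `|r ^+ m' - q| ^+ a).
  apply: (le_trans _ (ler_wpM2l _ (two_pt _ _))); last by rewrite exprn_ge0 // divr_ge0 // ltW.
  have Hd : r ^+ m <= 2 / (1 - r) * (`|r ^+ m - r ^+ m'| / 2).
    have -> : 2 / (1 - r) * (`|r ^+ m - r ^+ m'| / 2) = `|r ^+ m - r ^+ m'| / (1 - r).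
      by field; rewrite gt_eqF.
    by rewrite ler_pdivlMr // mulrC; apply: rdiff.
  rewrite -exprMn; apply: lerXn2r => //; rewrite nnegrE; first by rewrite exprn_ge0 // ltW.
  by rewrite mulr_ge0 ?divr_ge0 ?normr_ge0 // ltW.
have A0 := exprn_ge0 a (normr_ge0 (r ^+ m - q)).
have B0 := exprn_ge0 a (normr_ge0 (r ^+ m' - q)).
have M1 := Mc_ge1.
have HB := bmu_le h1 h2.
rewrite /Kc -mulrA.
apply: (le_trans (ler_wpM2l (ltW bm0) K1)).
rewrite mulrCA; apply: ler_wpM2l; first by rewrite exprn_ge0 // divr_ge0 // ltW.
rewrite mulrDr mulrDr; apply: lerD.
  by rewrite mulrA ler_wpM2r // ler_peMl // ltW.
by rewrite mulrA ler_wpM2r.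
Qed.
End Pair.

Local Open Scope ring_scope.

Section Sum.
Variables (T : finType) (e : rel T) (D : nat) (R : realFieldType) (r q bmu : R) (a : nat).
Hypotheses (esym : symmetric e) (eirr : irreflexive e) (reg : regular e D) (D0 : (0 < D)%N).
Hypotheses (r0 : 0 < r) (r1 : r < 1) (b0 : 0 < bmu).
Variable v0 : T.

Definition bt (s : {ffun T -> bool}) := bmu ^+ mono e s * (r ^+ mono e s) ^+ a.
Definition tm (s : {ffun T -> bool}) := bmu ^+ mono e s * `|r ^+ mono e s - q| ^+ a.
Let K := Kc r bmu a D.

Lemma bt_ge0 s : 0 <= bt s.
Proof. by rewrite /bt mulr_ge0 ?exprn_ge0 // ltW. Qed.
Lemma tm_ge0 s : 0 <= tm s.
Proof. by rewrite /tm mulr_ge0 ?exprn_ge0 // ltW. Qed.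
Lemma K_ge0 : 0 <= K.
Proof.
have r1c := r1.
rewrite /K /Kc mulr_ge0 ?exprn_ge0 ?divr_ge0 //; first by lra.
by rewrite !addr_ge0 // ?invr_ge0 ltW.
Qed.

Lemma step1 s : (if (0 < gc e s)%N then bt s else 0) <=
  K * tm s + K / (gc e s)%:R * \sum_(v | good e s v) tm (flip s v).
Proof.
have K0 := K_ge0.
case: ifP => hg; last first.
  apply: addr_ge0; first exact: mulr_ge0 K0 (tm_ge0 s).
  apply: mulr_ge0; first exact: divr_ge0 K0 (ler0n _ _).
  by apply: sumr_ge0 => v _; apply: tm_ge0.
set g : R := (gc e s)%:R.
have g0 : 0 < g by rewrite ltr0n.
have Hg : \sum_(v | good e s v) (1 : R) = g.
  rewrite /g /gc natr_sum big_mkcond; apply: eq_bigr => v _; by case: (good e s v).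
have H : g * bt s <= g * (K * tm s) + K * \sum_(v | good e s v) tm (flip s v).
  rewrite -Hg !mulr_suml mulr_sumr -big_split; apply: ler_sum => v gv /=.
  rewrite !mul1r -mulrDr.
  have [h1 [h2 h3]] := mono_good esym eirr reg gv.
  have hn : mono e s != mono e (flip s v) by rewrite eq_sym.
  exact: (pair_ineq q a r0 r1 b0 hn h2 h3).
rewrite -(ler_pM2l g0) mulrDr.
have -> : g * (K / g * \sum_(v | good e s v) tm (flip s v)) =
          K * \sum_(v | good e s v) tm (flip s v).
  by field; rewrite gt_eqF.
exact: H.
Qed.

Lemma pt_bound s v : good e s v ->
  tm s / (gc e (flip s v))%:R <= tm s * (D.+2)%:R / (gc e s)%:R.
Proof.
move=> gv.
have g1p : (0 < gc e (flip s v))%N by apply: (@good_gc _ _ _ v); rewrite good_flip_self //.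
have gp : (0 < gc e s)%N by apply: good_gc gv.
have hle := gc_flip esym s v reg.
have hn : ((gc e s)%:R <= (D.+2)%:R * (gc e (flip s v))%:R :> R).
  by rewrite -natrM ler_nat; nia.
set g := (gc e s)%:R in hn *; set g1 := (gc e (flip s v))%:R in hn *.
have g0 : 0 < g by rewrite ltr0n.
have g10 : 0 < g1 by rewrite ltr0n.
rewrite -subr_ge0.
have -> : tm s * (D.+2)%:R / g - tm s / g1 = tm s * ((D.+2)%:R * g1 - g) / (g * g1).
  by field; rewrite !gt_eqF.
apply: divr_ge0; first by rewrite mulr_ge0 ?tm_ge0 ?subr_ge0.
by rewrite mulr_ge0 // ltW.
Qed.

Lemma step3 : \sum_s ((gc e s)%:R^-1 * \sum_(v | good e s v) tm (flip s v)) <=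
  (D.+2)%:R * \sum_s tm s.
Proof.
have E : \sum_s ((gc e s)%:R^-1 * \sum_(v | good e s v) tm (flip s v)) =
  \sum_v \sum_s (if good e s v then tm (flip s v) / (gc e s)%:R else 0).
  rewrite exchange_big; apply: eq_bigr => s _.
  rewrite mulr_sumr big_mkcond; apply: eq_bigr => v _.
  by case: (good e s v); rewrite // mulrC.
rewrite E.
have E2 : forall v, \sum_s (if good e s v then tm (flip s v) / (gc e s)%:R else 0) =
  \sum_s (if good e s v then tm s / (gc e (flip s v))%:R else 0).
  move=> v; rewrite (reindex_inj (@flip_inj T v)); apply: eq_bigr => s _.
  by rewrite flipK good_flip_self.
under eq_bigr do rewrite E2.
apply: (@le_trans _ _ (\sum_v \sum_s (if good e s v then tm s * (D.+2)%:R / (gc e s)%:R else 0))).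
  apply: ler_sum => v _; apply: ler_sum => s _.
  by case: ifP => gv //; apply: pt_bound.
rewrite exchange_big mulr_sumr; apply: ler_sum => s _.
have -> : \sum_v (if good e s v then tm s * (D.+2)%:R / (gc e s)%:R else 0) =
  tm s * (D.+2)%:R / (gc e s)%:R * (gc e s)%:R.
  rewrite /gc natr_sum mulr_sumr; apply: eq_bigr => v _.
  by case: (good e s v); rewrite ?mulr1 ?mulr0.
case: (posnP (gc e s)) => [->|hp].
  by rewrite mulr0 mulr_ge0 ?tm_ge0.
rewrite divfK; first by rewrite mulrC.
by rewrite gt_eqF // ltr0n.
Qed.

Lemma step4 : \sum_s bt s <= 2 * \sum_s (if (0 < gc e s)%N then bt s else 0).
Proof.
have E : \sum_s bt s = \sum_s (if (0 < gc e s)%N then bt s else 0) +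
                       \sum_s (if gc e s == 0%N then bt s else 0).
  rewrite -big_split; apply: eq_bigr => s _.
  by case: (gc e s) => [|n] /=; rewrite ?add0r ?addr0.
rewrite E mulr2n mulrDl mul1r lerD2l.
rewrite (reindex_inj (@flip_inj T v0)); apply: ler_sum => s _.
case: ifP => [/eqP h0|_]; last by case: ifP => _ //; apply: bt_ge0.
have hs := gc0_flip esym eirr v0 reg D0 h0.
rewrite flipK in hs; rewrite hs.
have hb := mono_bad esym eirr reg (negbT (gc0 v0 h0)).
rewrite flipK in hb.
by rewrite /bt hb.
Qed.

Lemma lower_main : \sum_s bt s <= 2 * K * (D.+3)%:R * \sum_s tm s.
Proof.
have K0 := K_ge0.
apply: (le_trans step4).
have A : \sum_s (if (0 < gc e s)%N then bt s else 0) <=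
  K * \sum_s tm s + K * ((D.+2)%:R * \sum_s tm s).
  apply: (le_trans (ler_sum _ (fun s _ => step1 s))).
  rewrite big_split /= -mulr_sumr; apply: lerD => //.
  apply: (le_trans _ (ler_wpM2l K0 step3)).
  by rewrite mulr_sumr; apply: ler_sum => s _; rewrite mulrA.
have -> : 2 * K * (D.+3)%:R * \sum_s tm s = 2 * (K * \sum_s tm s + K * ((D.+2)%:R * \sum_s tm s)).
  by rewrite [(D.+3)%:R]mulrSr; ring.
by rewrite ler_pM2l.
Qed.
End Sum.

Lemma Zpart_gt0 (R : realFieldType) (T : finType) (e : rel T) (g : R) : 0 < g -> 0 < Zpart e g.
Proof.
move=> g0; rewrite /Zpart (bigD1 [ffun=> true]) //=.
have h1 : 0 < g ^+ mono e [ffun=> true] by rewrite exprn_gt0.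
have h2 : 0 <= \sum_(i | i != [ffun=> true]) g ^+ mono e i.
  by apply: sumr_ge0 => i _; rewrite exprn_ge0 // ltW.
by apply: (lt_le_trans h1); rewrite lerDl.
Qed.

Lemma abs_pow (R : realFieldType) (x q : R) (n : nat) : 0 <= x -> 0 <= q ->
  `|x - q| ^+ n <= x ^+ n + q ^+ n.
Proof.
move=> x0 q0.
case: (lerP x q) => h.
  apply: (@le_trans _ _ (q ^+ n)); last by rewrite lerDr exprn_ge0.
  by apply: lerXn2r; rewrite ?nnegrE //; lra.
apply: (@le_trans _ _ (x ^+ n)); last by rewrite lerDl exprn_ge0.
by apply: lerXn2r; rewrite ?nnegrE //; lra.
Qed.

Lemma pt_id (R : realFieldType) (P Zmu Znu x : R) (n : nat) : 0 < P -> 0 < Zmu -> 0 < Znu ->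
 P / Zmu * (2^-1 * `|x * P / Znu / (P / Zmu) - 1| ^+ n.+1) * (Znu ^+ n.+1 / Zmu ^+ (n.+1 - 1)) =
 2^-1 * (P * `|x - Znu / Zmu| ^+ n.+1).
Proof.
move=> P0 Zm0 Zn0.
have q0 : 0 < Znu / Zmu by rewrite divr_gt0.
have -> : x * P / Znu / (P / Zmu) - 1 = (x - Znu / Zmu) / (Znu / Zmu).
  by field; rewrite !gt_eqF.
rewrite normrM exprMn normfV exprVn (ger0_norm (ltW q0)) expr_div_n subn1 /= [Zmu ^+ n.+1]exprS.
set A := Znu ^+ n.+1; set B := Zmu ^+ n; set C := `|x - Znu / Zmu| ^+ n.+1.
have h1 : A != 0 by rewrite expf_neq0 // gt_eqF.
have h2 : B != 0 by rewrite expf_neq0 // gt_eqF.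
clearbody A B C.
field. by rewrite h1 h2 !gt_eqF.
Qed.

Lemma qpow (R : realFieldType) (Zmu Znu : R) (n : nat) : 0 < Zmu ->
  (Znu / Zmu) ^+ n.+1 * Zmu = Znu ^+ n.+1 / Zmu ^+ n.
Proof.
move=> Zm0; rewrite expr_div_n [Zmu ^+ n.+1]exprS.
set A := Znu ^+ n.+1; set B := Zmu ^+ n.
have h2 : B != 0 by rewrite /B expf_neq0 // gt_eqF.
clearbody A B.
field. by rewrite h2 (gt_eqF Zm0).
Qed.

Unset Implicit Arguments.
Set Strict Implicit.
Local Open Scope ring_scope.

Theorem lemma7p2 (R : realType) (a D : nat) (bnu bmu : R) :
  (2 <= a)%N -> (3 <= D)%N ->
  bnu < bmu ->
  (D%:R - 2) / D%:R <= bnu ->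
  (bnu / bmu) ^+ a * bmu < (D%:R - 2) / D%:R ->
  exists C : R, 0 < C /\
    forall (T : finType) (e : rel T),
      (0 < #|T|)%N -> simple_graph e -> regular e D ->
      let b := (bnu / bmu) ^+ a * bmu in
      let X := chi_div a (gibbs e bnu) (gibbs e bmu)
               * (Zpart e bnu ^+ a / Zpart e bmu ^+ (a - 1)) in
      C^-1 * Zpart e b <= X /\ X <= C * Zpart e b.
Proof.
move=> ha hD hlt hnu _.
have D3 : (3 <= D%:R :> R) by rewrite (ler_nat R 3 D).
have Dp : 0 < (D%:R : R) by lra.
have c0 : 0 < (D%:R - 2) / D%:R :> R by rewrite divr_gt0 //; lra.
have bnu0 : 0 < bnu by lra.
have bmu0 : 0 < bmu by lra.
set r := bnu / bmu.
have r0 : 0 < r by rewrite divr_gt0.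
have r1 : r < 1 by rewrite /r ltr_pdivrMr // mul1r.
have hrb : r * bmu = bnu by rewrite /r divfK // gt_eqF.
set K := Kc r bmu a D.
have K0 : 0 <= K.
  rewrite /K /Kc mulr_ge0 //; first by rewrite exprn_ge0 // divr_ge0 //; lra.
  exact: (le_trans ler01 (Mc_ge1 D bmu0)).
set c := 2 * K * (D.+3)%:R * 2.
have two : 0 <= 2 :> R by lra.
have cge : 0 <= c.
  rewrite /c. apply: mulr_ge0 => //. apply: mulr_ge0 => //. by apply: mulr_ge0.
exists (1 + c); split; first by lra.
move=> T e hT [esym eirr] reg b X.
case/card_gt0P: hT => v0 _.
have D0 : (0 < D)%N by apply: leq_trans hD.
have [n hn] : exists n, a = n.+1 by exists a.-1; rewrite prednK // ltnW.
set Zmu := Zpart e bmu; set Znu := Zpart e bnu.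
have Zmu0 : 0 < Zmu by apply: Zpart_gt0.
have Znu0 : 0 < Znu by apply: Zpart_gt0.
set q := Znu / Zmu.
have q0 : 0 < q by rewrite divr_gt0.
have Zb : Zpart e b = \sum_s bt e r bmu a s.
  rewrite /Zpart /b -/r; apply: eq_bigr => s _.
  by rewrite /bt exprMn exprAC mulrC.
have HX : X = 2^-1 * \sum_s tm e r q bmu a s.
  rewrite /X /chi_div mulr_suml mulr_sumr; apply: eq_bigr => s _.
  rewrite /gibbs /tm -/Zmu -/Znu.
  have -> : bnu ^+ mono e s = r ^+ mono e s * bmu ^+ mono e s by rewrite -exprMn hrb.
  rewrite hn /q; apply: pt_id => //; by rewrite exprn_gt0.
have Hup : \sum_s tm e r q bmu a s <= \sum_s bt e r bmu a s + q ^+ a * Zmu.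
  rewrite /Zmu /Zpart mulr_sumr -big_split; apply: ler_sum => s _; rewrite /tm /bt /=.
  rewrite [q ^+ a * _]mulrC -mulrDr; apply: ler_wpM2l; first by rewrite exprn_ge0 // ltW.
  by apply: abs_pow; rewrite ?exprn_ge0 // ltW.
have Hhol : q ^+ a * Zmu <= \sum_s bt e r bmu a s.
  have H := @holder R _ (fun s => bmu ^+ mono e s) (fun s => r ^+ mono e s)
     (fun s => exprn_ge0 _ (ltW bmu0)) (fun s => exprn_ge0 _ (ltW r0)) n.
  have E : \sum_s bmu ^+ mono e s * r ^+ mono e s = Znu.
    by apply: eq_bigr => s _; rewrite -exprMn mulrC hrb.
  rewrite E -/(Zpart e bmu) -/Zmu -hn in H.
  rewrite hn /q qpow // ler_pdivrMr ?exprn_gt0 // mulrC -hn.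
  exact: H.
have Xs : X <= Zpart e b.
  rewrite HX Zb; move: Hup Hhol; set S1 := \sum_s tm _ _ _ _ _ _; set S2 := \sum_s bt _ _ _ _ _.
  move=> Hup Hhol; lra.
have Hlow := lower_main q a esym eirr reg D0 r0 r1 bmu0 v0.
have Xge : 0 <= X.
  rewrite HX mulr_ge0 ?invr_ge0 // sumr_ge0 // => s _.
  by rewrite /tm mulr_ge0 ?exprn_ge0 // ltW.
have Zl : Zpart e b <= c * X.
  rewrite Zb HX; apply: (le_trans Hlow); rewrite -/K /c.
  have -> : 2 * K * (D.+3)%:R * 2 * (2^-1 * \sum_s tm e r q bmu a s) =
            2 * K * (D.+3)%:R * \sum_s tm e r q bmu a s by field.
  exact: le_refl.
have Zge : 0 <= Zpart e b by apply: (le_trans Xge).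
have c1 : 0 < 1 + c by lra.
split.
  rewrite mulrC ler_pdivrMr //; nra.
nra.
Qed.
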